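(* Let $X$ be an $n$-dimensional real Banach space and let $A \subset X$ be a bounded set not containing the zero vector, such that for every non-zero $x \in X$ there exists $r_x > 0$ with $r_x x \in A$. Then: (i) every ball-covering of $A$ contains at least $n+1$ balls; (ii) if, in addition, $X$ is smooth and $d(0, A) > 0$, then $A$ admits a ball-covering consisting of $n+1$ balls.
   Context: A ball-covering of a set $A \subset X$ is a collection of open balls $B(c, r) = \{ z : \|c - z\| < r\}$, none containing the zero vector (i.e. $0 < r \le \|c\|$), whose union contains $A$. $X$ is smooth if every non-zero $x \in X$ has a unique $f \in S_{X^*}$ with $f(x) = \|x\|$. $d(0,A) = \inf\{\|a\|: a \in A\}$. *)

(* Defs.v *)
From HB Require Import structures.
From mathcomp Require Import all_boot all_order all_algebra.
From mathcomp Require Import all_classical all_reals all_analysis.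
Set Implicit Arguments. Unset Strict Implicit. Unset Printing Implicit Defensive.
Import Order.TTheory GRing.Theory Num.Theory.
Import numFieldNormedType.Exports.
Local Open Scope classical_set_scope.
Local Open Scope ring_scope.

Section Defs.
Variables (R : realType) (X : normedModType R).

Definition is_dim (n : nat) : Prop :=
  exists f : 'rV[R]_n -> X,
    (forall (a : R) u v, f (a *: u + v) = a *: f u + f v) /\ bijective f.

Definition oball (c : X) (r : R) : set X := [set z | `|c - z| < r].

(* a ball-covering of A: a collection of open balls, none containing 0
   (0 < r <= ||c||), whose union contains A *)
Definition ball_covering (A : set X) (C : set (set X)) : Prop :=
  (forall B, C B -> exists c r, 0 < r /\ r <= `|c| /\ B = oball c r) /\
  A `<=` \bigcup_(B in C) B.

Definition dual_unit (f : X -> R) : Prop :=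
  (forall (a : R) u v, f (a *: u + v) = a * f u + f v) /\
  continuous f /\
  sup [set `|f x| | x in [set x : X | `|x| <= 1]] = 1.

Definition smooth : Prop :=
  forall x : X, x != 0 ->
    exists f, dual_unit f /\ f x = `|x| /\
      (forall g, dual_unit g -> g x = `|x| -> g =1 f).

Definition dist0 (A : set X) : R := inf [set `|a| | a in A].

Definition norm_bounded (A : set X) : Prop :=
  exists M : R, forall a, A a -> `|a| <= M.

End Defs.

(* Main.v *)
Require Import Defs.
From HB Require Import structures.
From mathcomp Require Import all_boot all_order all_algebra.
From mathcomp Require Import all_classical all_reals all_analysis.
From mathcomp Require Import ring lra.
Set Implicit Arguments. Unset Strict Implicit. Unset Printing Implicit Defensive.
Import Order.TTheory GRing.Theory Num.Theory.
Import numFieldNormedType.Exports.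
Local Open Scope classical_set_scope.
Local Open Scope ring_scope.


Lemma nested_cpt (T : topologicalType) (D : set T) (W : nat -> set T) :
  compact D -> (forall k, W k `<=` D) -> (forall k, closed (W k)) ->
  (forall k, W k !=set0) -> (forall i j, (i <= j)%N -> W j `<=` W i) ->
  exists p, forall k, W k p.
Proof.
move=> cD WD Wc Wn Wd.
have FF : Filter (filter_from setT W).
  apply: filter_from_filter; first by exists 0%N.
  move=> i j _ _; exists (maxn i j) => // x Wx; split.
    by apply: (Wd i (maxn i j)) => //; rewrite leq_maxl.
  by apply: (Wd j (maxn i j)) => //; rewrite leq_maxr.
have PF : ProperFilter (filter_from setT W).
  by apply: filter_from_proper => i _; exact: Wn.
have [|p [Dp clp]] := cD _ PF.
  by exists 0%N => //; exact: WD.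
exists p => k; apply: Wc => B Bp.
have := clp (W k) B; apply => //; by exists k.
Qed.

Lemma lip_cont (R : realType) (V : normedModType R) (f : V -> R) (k : R) :
  (forall x y, `|f x - f y| <= k * `|x - y|) -> continuous f.
Proof.
move=> H x; apply/cvgrPdist_lt => e e0.
have k1 : 0 < `|k| + 1 by rewrite ltr_wpDl.
have hd : forall d, 0 <= d -> d < e / (`|k| + 1) -> k * d < e.
  move=> d d0 de; apply: (le_lt_trans (y := (`|k| + 1) * d)).
    apply: ler_wpM2r => //; apply: (le_trans (ler_norm k)); rewrite lerDl //.
  by rewrite -ltr_pdivlMl // mulrC.
near=> y.
apply: (le_lt_trans (H x y)); apply: hd => //.
near: y. apply: cvgr_dist_lt => //. by rewrite divr_gt0.
Unshelve. all: by end_near.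
Qed.

Lemma bnd (R : realType) n (A : set 'rV[R]_n) M : (forall x, A x -> `|x| <= M) -> bounded_set A.
Proof.
move=> h; rewrite /bounded_near /=; near=> M' => x Ax /=.
apply: le_trans (h x Ax) _; near: M'; apply: nbhs_pinfty_ge; exact: num_real.
Unshelve. all: by end_near. Qed.
Lemma cl_le (T : topologicalType) (R : realType) (g : T -> R) c : continuous g -> closed [set x | g x <= c].
Proof. move=> gc; apply: (@preimage_closed _ _ g [set y | y <= c]); [move=> ? _; exact: gc | exact: closed_le]. Qed.
Lemma cl_ge (T : topologicalType) (R : realType) (g : T -> R) c : continuous g -> closed [set x | c <= g x].
Proof. move=> gc; apply: (@preimage_closed _ _ g [set y | c <= y]); [move=> ? _; exact: gc | exact: closed_ge]. Qed.
Lemma op_lt (T : topologicalType) (R : realType) (g : T -> R) c : continuous g -> open [set x | g x < c].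
Proof. move=> gc; apply: (@open_comp _ _ g [set y | y < c]); [move=> ? _; exact: gc | exact: open_lt]. Qed.

Lemma evt_min (R : realType) n (f : 'rV[R]_n -> R) (A : set 'rV[R]_n) :
  A !=set0 -> compact A -> continuous f ->
  exists2 c, A c & forall t, A t -> f c <= f t.
Proof.
move=> A0 cA cf; have [c /set_mem Ac h] := EVT_min_rV A0 cA (continuous_subspaceT cf).
by exists c => // t At; apply: h; exact: mem_set.
Qed.

Lemma evt_max (R : realType) n (f : 'rV[R]_n -> R) (A : set 'rV[R]_n) :
  A !=set0 -> compact A -> continuous f ->
  exists2 c, A c & forall t, A t -> f t <= f c.
Proof.
move=> A0 cA cf; have [c /set_mem Ac h] := EVT_max_rV A0 cA (continuous_subspaceT cf).
by exists c => // t At; apply: h; exact: mem_set.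
Qed.

Lemma entry_le (R : realType) n (u : 'rV[R]_n) j : `|u ord0 j| <= `|u|.
Proof.
have /mapP[k Hk ->] : `|u ord0 j| \in [seq `|u x.1 x.2| | x : 'I_1 * 'I_n].
  by apply/mapP; exists (ord0, j) => //=; rewrite mem_enum.
by rewrite [leRHS]/Num.norm /= mx_normrE; apply/bigmax_geP; right => /=; exists k.
Qed.

Section Coord.
Variables (R : realType) (X : normedModType R) (n : nat) (phi : 'rV[R]_n -> X).
Hypothesis philin : forall (a : R) u v, phi (a *: u + v) = a *: phi u + phi v.
Hypothesis phiinj : injective phi.

Lemma phi0 : phi 0 = 0.
Proof.
have := philin 1 0 0; rewrite !scale1r !addr0 => h.
by apply: (addrI (phi 0)); rewrite addr0 -h.
Qed.
Lemma phiD u v : phi (u + v) = phi u + phi v.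
Proof. by have := philin 1 u v; rewrite !scale1r. Qed.
Lemma phiZ a u : phi (a *: u) = a *: phi u.
Proof. by rewrite -[a *: u]addr0 philin phi0 addr0. Qed.
Lemma phiN u : phi (- u) = - phi u.
Proof. by rewrite -scaleN1r phiZ scaleN1r. Qed.
Lemma phiB u v : phi (u - v) = phi u - phi v.
Proof. by rewrite phiD phiN. Qed.
Lemma phi_sum (F : 'I_n -> 'rV[R]_n) : phi (\sum_j F j) = \sum_j phi (F j).
Proof. exact: (big_morph phi phiD phi0). Qed.

Definition N u := `|phi u|.

Lemma N_ub : exists2 b, 0 < b & forall u, N u <= b * `|u|.
Proof.
exists (\sum_(j < n) N (delta_mx 0 j) + 1).
  apply: (lt_le_trans ltr01); rewrite lerDr; apply: sumr_ge0 => j _.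
  exact: normr_ge0.
move=> u; rewrite /N {1}(row_sum_delta u) phi_sum.
apply: (le_trans (ler_norm_sum _ _ _)).
rewrite mulrDl mul1r; apply: ler_wpDr; first exact: normr_ge0.
rewrite mulr_suml; apply: ler_sum => j _; rewrite phiZ normrZ mulrC.
by apply: ler_wpM2l; [exact: normr_ge0 | exact: entry_le].
Qed.

Lemma N_cont : continuous N.
Proof.
have [b b0 Hb] := N_ub.
apply: (@lip_cont _ _ _ b) => x y.
apply: (le_trans (ler_dist_dist _ _)); rewrite -phiB; exact: Hb.
Qed.

Lemma N_gt0 u : u != 0 -> 0 < N u.
Proof.
move=> u0; rewrite /N normr_gt0; apply: contra u0 => /eqP h.
by apply/eqP; apply: phiinj; rewrite h phi0.
Qed.

Lemma NZ a u : N (a *: u) = `|a| * N u.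
Proof. by rewrite /N phiZ normrZ. Qed.
Lemma ND u v : N (u + v) <= N u + N v.
Proof. by rewrite /N phiD ler_normD. Qed.
Lemma NN u : N (- u) = N u.
Proof. by rewrite /N phiN normrN. Qed.

Lemma N_lb : (0 < n)%N -> exists2 a, 0 < a & forall u, a * `|u| <= N u.
Proof.
move=> hn.
set S := [set u : 'rV[R]_n | `|u| = 1].
have S0 : S !=set0.
  pose u0 : 'rV[R]_n := const_mx 1.
  have u00 : u0 != 0.
    apply/eqP => /matrixP /(_ ord0 (Ordinal hn)); rewrite !mxE => /eqP.
    by rewrite oner_eq0.
  exists (`|u0|^-1 *: u0); rewrite /S /= normrZ normfV normr_id mulVf //.
  by rewrite normr_eq0.
have cS : compact S.
  apply: bounded_closed_compact.
    by apply: (@bnd _ _ _ 1) => x; rewrite /S /= => ->.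
  apply: (@preimage_closed _ _ (Num.norm : 'rV[R]_n -> R) [set y | y = 1]).
    by move=> ? _; exact: norm_continuous.
  exact: closed_eq.
have [c Sc cmin] := evt_min S0 cS N_cont.
have c0 : c != 0 by apply/eqP => c0; move: Sc; rewrite /S /= c0 normr0 => /eqP; rewrite eq_sym oner_eq0.
exists (N c); first exact: N_gt0.
move=> u; have [->|u0] := eqVneq u 0; first by rewrite normr0 mulr0 /N normr_ge0.
have := cmin (`|u|^-1 *: u); rewrite NZ normfV normr_id.
have nu : 0 < `|u| by rewrite normr_gt0.
rewrite ler_pdivlMl //; rewrite mulrC; apply.
by rewrite /S /= normrZ normfV normr_id mulVf // gt_eqF.
Qed.

End Coord.


Lemma cont_sum (T : topologicalType) (R : realType) (I : Type) (r : seq I)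
  (F : I -> T -> R) : (forall i, continuous (F i)) ->
  continuous (fun x => \sum_(i <- r) F i x).
Proof.
move=> h; elim: r => [|i r ih].
  rewrite (_ : (fun x => _) = (fun=> 0)); first exact: cst_continuous.
  by apply/funext => y; rewrite big_nil.
rewrite (_ : (fun x => _) = (fun x => F i x + \sum_(j <- r) F j x)); last first.
  by apply/funext => y; rewrite big_cons.
move=> x; apply: (@continuousD _ R^o _ (F i) (fun x => \sum_(j <- r) F j x)).
  exact: h.
exact: ih.
Qed.

Section Dot.
Variables (R : realType) (n : nat).
Implicit Types u v w : 'rV[R]_n.

Definition dot u v := \sum_(j < n) u ord0 j * v ord0 j.

Lemma dotC u v : dot u v = dot v u.
Proof. by apply: eq_bigr => j _; rewrite mulrC. Qed.
Lemma dotDl u v w : dot (u + v) w = dot u w + dot v w.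
Proof. by rewrite /dot -big_split; apply: eq_bigr => j _; rewrite mxE mulrDl. Qed.
Lemma dotZl a u v : dot (a *: u) v = a * dot u v.
Proof. by rewrite /dot mulr_sumr; apply: eq_bigr => j _; rewrite mxE mulrA. Qed.
Lemma dotDr u v w : dot w (u + v) = dot w u + dot w v.
Proof. by rewrite dotC dotDl !(dotC w). Qed.
Lemma dotZr a u v : dot v (a *: u) = a * dot v u.
Proof. by rewrite dotC dotZl dotC. Qed.
Lemma dotNl u v : dot (- u) v = - dot u v.
Proof. by rewrite -scaleN1r dotZl mulN1r. Qed.
Lemma dotNr u v : dot v (- u) = - dot v u.
Proof. by rewrite -scaleN1r dotZr mulN1r. Qed.
Lemma dotBl u v w : dot (u - v) w = dot u w - dot v w.
Proof. by rewrite dotDl dotNl. Qed.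
Lemma dotBr u v w : dot w (u - v) = dot w u - dot w v.
Proof. by rewrite dotDr dotNr. Qed.
Lemma dot0l u : dot 0 u = 0.
Proof. by rewrite /dot big1 // => j _; rewrite mxE mul0r. Qed.
Lemma dot0r u : dot u 0 = 0.
Proof. by rewrite dotC dot0l. Qed.

Lemma dot_ge0 u : 0 <= dot u u.
Proof. by apply: sumr_ge0 => j _; rewrite -expr2 sqr_ge0. Qed.

Lemma dot_gt0 u : u != 0 -> 0 < dot u u.
Proof.
move=> u0; rewrite lt_def dot_ge0 andbT; apply: contra u0 => /eqP h.
apply/eqP/rowP => j; rewrite mxE; apply/eqP; rewrite -sqrf_eq0 expr2; apply/eqP.
by apply: (psumr_eq0P (P := predT) (F := fun j => u ord0 j * u ord0 j)) => // i _;
  rewrite -expr2 sqr_ge0.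
Qed.

Lemma dot_contl v : continuous (fun w => dot w v).
Proof.
apply: cont_sum => j x.
apply: (@continuousM R _ (fun w : 'rV[R]_n => w ord0 j) (fun=> v ord0 j)).
  exact: coord_continuous.
exact: cst_continuous.
Qed.

Lemma dot_contr v : continuous (fun w => dot v w).
Proof. by rewrite (_ : (fun w => _) = (fun w => dot w v)); [exact: dot_contl | apply/funext => w; rewrite dotC]. Qed.

Lemma E_cont : continuous (fun w => dot w w).
Proof.
apply: cont_sum => j x.
apply: (@continuousM R _ (fun w : 'rV[R]_n => w ord0 j) (fun w : 'rV[R]_n => w ord0 j)).
  exact: coord_continuous.
exact: coord_continuous.
Qed.

End Dot.

Lemma archi_inv (R : realType) (d : R) : 0 < d -> exists k : nat, (k.+2%:R)^-1 < d.
Proof.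
move=> d0; exists (Num.trunc (d^-1)).
have h := truncnS_gt (d^-1).
rewrite -[X in _ < X]invrK ltf_pV2 ?posrE ?invr_gt0 ?ltr0n //.
apply: (lt_le_trans h); by rewrite ler_nat.
Qed.


Lemma inv_lt1 (R : realType) k : ((k.+2%:R : R)^-1 < 1).
Proof. by rewrite invf_lt1 ?ltr0n // ltr1n. Qed.
Lemma inv_gt0 (R : realType) k : (0 < (k.+2%:R : R)^-1).
Proof. by rewrite invr_gt0 ltr0n. Qed.

Lemma sphere_compact (R : realType) n : compact [set u : 'rV[R]_n | `|u| = 1].
Proof.
apply: bounded_closed_compact.
  by apply: (@bnd _ _ _ 1) => x; rewrite /= => ->.
apply: (@preimage_closed _ _ (Num.norm : 'rV[R]_n -> R) [set y | y = 1]).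
  by move=> ? _; exact: norm_continuous.
exact: closed_eq.
Qed.

Section Coord2.
Variables (R : realType) (X : normedModType R) (n : nat) (phi : 'rV[R]_n -> X).
Hypothesis philin : forall (a : R) u v, phi (a *: u + v) = a *: phi u + phi v.
Hypothesis phiinj : injective phi.
Hypothesis hn : (0 < n)%N.

Local Notation N := (N phi).
Implicit Types (g u v y : 'rV[R]_n).

Lemma N0 : N 0 = 0.
Proof. by rewrite /N phi0 // normr0. Qed.
Lemma N_ge0 u : 0 <= N u.
Proof. exact: normr_ge0. Qed.

Lemma NB u v : N (u - v) <= N u + N v.
Proof. by rewrite -(NN philin v); exact: ND. Qed.

Lemma N_shift_cont g : continuous (fun y => N (g - y)).
Proof.
have [b b0 Hb] := N_ub philin.
apply: (@lip_cont _ _ _ b) => x y.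
apply: (le_trans (ler_dist_dist _ _)); rewrite -phiB // (_ : g - x - (g - y) = - (x - y)).
  by rewrite phiN // normrN; exact: Hb.
by rewrite opprB addrC addrA subrK opprB.
Qed.

Lemma sep g r : 0 < r -> r <= N g ->
  exists2 v : 'rV[R]_n, v != 0 & forall y, N (g - y) < r -> 0 < dot v y.
Proof.
move=> r0 rg.
have [a a0 Ha] := N_lb philin phiinj hn.
pose K := fun k : nat => [set y | N (g - y) <= (1 - (k.+2%:R)^-1) * r].
have rho_lt k : (1 - (k.+2%:R)^-1) * r < r.
  move: (inv_gt0 R k) (inv_lt1 R k); move: (k.+2%:R^-1) => i; nra.
have rho_le k : (1 - (k.+2%:R)^-1) * r <= r by exact/ltW.
have rho_ge0 k : 0 <= (1 - (k.+2%:R)^-1) * r.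
  move: (inv_gt0 R k) (inv_lt1 R k); move: (k.+2%:R^-1) => i; nra.
have Kc k : compact (K k).
  apply: bounded_closed_compact.
    apply: (@bnd _ _ _ ((N g + r) / a)) => y Ky.
    rewrite ler_pdivlMr // mulrC; apply: (le_trans (Ha y)).
    have e : g - (g - y) = y by rewrite opprB addrC subrK.
    have := NB g (g - y); rewrite e => h; apply: (le_trans h).
    by rewrite lerD2l; apply: (le_trans Ky).
  apply: (@cl_le _ _ (fun y => N (g - y))); exact: N_shift_cont.
have Kg k : K k g by rewrite /K /= subrr N0.
have Kconv k y q t : K k y -> K k q -> 0 <= t <= 1 -> K k (q + t *: (y - q)).
  move=> Ky Kq /andP[t0 t1]; rewrite /K /=.
  have -> : g - (q + t *: (y - q)) = (1 - t) *: (g - q) + t *: (g - y).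
    by apply/rowP => j; rewrite !mxE; ring.
  apply: (le_trans (ND philin _ _)); rewrite !(NZ philin) !ger0_norm ?subr_ge0 //.
  move: Ky Kq; rewrite /K /=; move: (N (g - y)) (N (g - q)) => A B.
  move: ((1 - (k.+2%:R)^-1) * r) => C; nra.
have near k : exists2 q, K k q & forall y, K k y -> dot q q <= dot q y.
  have [q Kq qmin] := evt_min (ex_intro _ g (Kg k)) (Kc k) (@E_cont R n).
  exists q => // y Ky.
  rewrite -subr_ge0 -dotBr leNgt; apply/negP => hneg.
  set al := - dot q (y - q).
  set be := dot (y - q) (y - q).
  have al0 : 0 < al by rewrite /al oppr_gt0.
  have be0 : 0 <= be by exact: dot_ge0.
  set t := al / (be + al).
  have bea : 0 < be + al by rewrite ltr_wpDl.
  have t0 : 0 < t by rewrite divr_gt0.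
  have teq : t * (be + al) = al by rewrite /t mulfVK // gt_eqF.
  have t1 : t <= 1.
    by rewrite /t ler_pdivrMr // mul1r lerDr.
  have := qmin _ (Kconv k y q t Ky Kq _); rewrite ltW ?t0 ?t1 //.
  move/(_ isT).
  rewrite !dotDl !dotDr !dotZl !dotZr (dotC (y - q) q) -/be.
  have -> : dot q (y - q) = - al by rewrite /al opprK.
  clearbody t; clearbody al be; nra.
pose V := fun k : nat => [set v : 'rV[R]_n | `|v| = 1 /\ forall y, K k y -> 0 <= dot v y].
have Vsub k : V k `<=` [set u : 'rV[R]_n | `|u| = 1] by move=> v [].
have Vcl k : closed (V k).
  have -> : V k = [set u : 'rV[R]_n | `|u| = 1] `&` \bigcap_(y in K k) [set v | 0 <= dot v y].
    by apply/seteqP; split => v /= [h1 h2]; split.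
  apply: closedI.
    apply: (@preimage_closed _ _ (Num.norm : 'rV[R]_n -> R) [set y | y = 1]).
      by move=> ? _; exact: norm_continuous.
    exact: closed_eq.
  apply: closed_bigI => y _; apply: cl_ge; exact: dot_contl.
have Vne k : V k !=set0.
  have [q Kq qmin] := near k.
  have q0 : q != 0.
    apply/eqP => q0; move: Kq; rewrite q0 /K /= subr0 => h.
    by have := le_lt_trans h (rho_lt k); rewrite ltNge rg.
  have nq : 0 < `|q| by rewrite normr_gt0.
  exists (`|q|^-1 *: q); split.
    by rewrite normrZ normfV normr_id mulVf // gt_eqF.
  move=> y Ky; rewrite dotZl mulr_ge0 // ?invr_ge0 ?ltW //.
  exact: lt_le_trans (dot_gt0 q0) (qmin y Ky).
have Vnest i j : (i <= j)%N -> V j `<=` V i.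
  move=> ij v [v1 vK]; split => // y Ky; apply: vK; rewrite /K /=.
  apply: (le_trans Ky); apply: ler_wpM2r; first exact: ltW.
  rewrite lerD2l lerN2.
  by rewrite lef_pV2 ?posrE ?ltr0n // ler_nat ltnS ltnS.
have [v vV] := nested_cpt (@sphere_compact R n) Vsub Vcl Vne Vnest.
have v1 : `|v| = 1 by case: (vV 0%N).
have v0 : v != 0 by apply/eqP => v0; move: v1; rewrite v0 normr0 => /eqP; rewrite eq_sym oner_eq0.
have weak y : N (g - y) < r -> 0 <= dot v y.
  move=> hy.
  have dl : 0 < (r - N (g - y)) / r by rewrite divr_gt0 // subr_gt0.
  have [k hk] := archi_inv dl.
  case: (vV k) => _; apply; rewrite /K /=.
  move: hk; rewrite ltr_pdivlMr // => hk.
  move: (k.+2%:R^-1) hk => i hk; nra.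
exists v => // y hy; rewrite lt_def weak // andbT; apply/negP => /eqP dv0.
set e := (r - N (g - y)) / (N v + 1).
have Nv1 : 0 < N v + 1 by rewrite ltr_wpDl ?N_ge0.
have e0 : 0 < e by rewrite divr_gt0 // subr_gt0.
have : N (g - (y - e *: v)) < r.
  have -> : g - (y - e *: v) = (g - y) + e *: v by rewrite opprB addrA addrAC.
  apply: (le_lt_trans (ND philin _ _)); rewrite (NZ philin) gtr0_norm //.
  have : e * (N v + 1) = r - N (g - y) by rewrite /e mulfVK // gt_eqF.
  have := N_ge0 v; clearbody e; nra.
move/weak; rewrite dotBr dotZr dv0 sub0r oppr_ge0 leNgt mulr_gt0 //.
exact: dot_gt0.
Qed.

End Coord2.


Definition ext (T : Type) m (h : 'I_m -> T) (x : T) : 'I_m.+1 -> T :=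
  fun i => match unlift ord_max i with Some j => h j | None => x end.

Lemma ext_lift T m (h : 'I_m -> T) x j : ext h x (lift ord_max j) = h j.
Proof. by rewrite /ext liftK. Qed.
Lemma ext_max T m (h : 'I_m -> T) x : ext h x ord_max = x.
Proof. by rewrite /ext unlift_none. Qed.

Lemma enum_or (T : Type) (C : set T) (B0 : T) : C B0 -> forall m,
  (exists h : 'I_m.+1 -> T, injective h /\ forall i, C (h i)) \/
  (exists g : 'I_m -> T, (forall i, C (g i)) /\ C `<=` range g).
Proof.
move=> CB0; elim=> [|m [[h [hi hC]]|[g [gC gr]]]].
- left; exists (fun=> B0); split => // i j _; apply: val_inj; by rewrite /= !ord1.
- have [sub|nsub] := pselect (C `<=` range h).
    by right; exists h.
  have [x [Cx xr]] : exists x, C x /\ ~ range h x.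
    apply: contrapT => hh; apply: nsub => x Cx; apply: contrapT => xr.
    by apply: hh; exists x.
  left; exists (ext h x); split; last first.
    by move=> i; rewrite /ext; case: (unlift _ i).
  move=> i j; case: (unliftP ord_max i) => [i' ->|->];
    case: (unliftP ord_max j) => [j' ->|->]; rewrite ?ext_lift ?ext_max //.
  + by move/hi => ->.
  + by move=> e; exfalso; apply: xr; exists i'.
  + by move=> e; exfalso; apply: xr; exists j'.
- right; exists (ext g B0); split.
    by move=> i; rewrite /ext; case: (unlift _ i).
  move=> x /gr [j _ <-]; exists (lift ord_max j) => //; exact: ext_lift.
Qed.

Lemma part1 (R : realType) (X : normedModType R) (n : nat)
  (hn : (0 < n)%N) (hdim : is_dim X n) (A : set X)
  (hrad : forall x : X, x != 0 -> exists r : R, 0 < r /\ A (r *: x)) :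
  (forall C : set (set X), ball_covering A C ->
     exists f : 'I_n.+1 -> set X, injective f /\ (forall i, C (f i))).
Proof.
case: hdim => phi [philin [psi phiK psiK]].
have phiinj : injective phi := can_inj phiK.
move=> C [Cb Ccov].
pose u1 : 'rV[R]_n := const_mx 1.
have u10 : u1 != 0.
  apply/eqP => /matrixP /(_ ord0 (Ordinal hn)); rewrite !mxE => /eqP.
  by rewrite oner_eq0.
have phinz u : u != 0 -> phi u != 0.
  move=> u0; apply: contra u0 => /eqP h; apply/eqP; apply: phiinj.
  by rewrite h phi0.
have [r1 [r10 Ar1]] := hrad _ (phinz _ u10).
have [B0 CB0 _] := Ccov _ Ar1.
case: (enum_or CB0 n) => [//|[g [gC gr]]].
exfalso.
have hv : forall i, exists v : 'rV[R]_n, forall y, g i (phi y) -> 0 < dot v y.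
  move=> i; have [c [r [r0 [rc ge]]]] := Cb _ (gC i).
  have [|v _ hv] := sep philin phiinj hn (g := psi c) r0.
    by rewrite /N psiK.
  exists v => y; rewrite ge /oball /= => hy; apply: hv.
  by rewrite /N phiB // psiK.
have [V HV] := choice hv.
pose M : 'M[R]_n := \matrix_(j, i) V i ord0 j.
have key u i : (u *m M) ord0 i = dot (V i) u.
  rewrite !mxE dotC; apply: eq_bigr => j _; by rewrite mxE.
have [u [u0 hu]] : exists u : 'rV[R]_n, u != 0 /\ forall i, dot (V i) u <= 0.
  case: (boolP (\det M == 0)) => [/det0P [u u0 uM]| dM].
    by exists u; split => // i; rewrite -key uM mxE.
  have Mu : M \in unitmx by rewrite unitmxE unitfE.
  exists (const_mx (-1) *m invmx M); split.
    apply/eqP => h.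
    have := mulmxKV Mu (const_mx (-1) : 'rV[R]_n); rewrite h mul0mx.
    move/matrixP => /(_ ord0 (Ordinal hn)); rewrite !mxE => /eqP.
    by rewrite eq_sym oppr_eq0 oner_eq0.
  by move=> i; rewrite -key mulmxKV // mxE lerN10.
have [r [r0 Ar]] := hrad _ (phinz _ u0).
have [B CB Bx] := Ccov _ Ar.
have [i _ gi] := gr _ CB.
have := HV i (r *: u); rewrite phiZ // gi => /(_ Bx).
rewrite dotZr pmulr_rgt0 // => h; have := hu i; by rewrite leNgt h.
Qed.


Section Lin.
Variables (R : realType) (X : normedModType R) (f : X -> R).
Hypothesis flin : forall (a : R) u v, f (a *: u + v) = a * f u + f v.
Lemma f0 : f 0 = 0.
Proof.
have := flin 1 0 0; rewrite scale1r mul1r !addr0 => h.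
by apply: (addrI (f 0)); rewrite addr0 -h.
Qed.
Lemma fZ a u : f (a *: u) = a * f u.
Proof. by rewrite -[a *: u]addr0 flin f0 addr0. Qed.
Lemma fD u v : f (u + v) = f u + f v.
Proof. by have := flin 1 u v; rewrite scale1r mul1r. Qed.
Lemma fB u v : f (u - v) = f u - f v.
Proof. by rewrite fD -scaleN1r fZ mulN1r. Qed.
End Lin.

Lemma dual_bound (R : realType) (X : normedModType R) (f : X -> R) :
  dual_unit f -> forall x, `|f x| <= `|x|.
Proof.
move=> [flin [fc fs]] x.
set S := [set `|f x| | x in [set x : X | `|x| <= 1]] in fs.
have hs : has_sup S.
  apply: contrapT => hs; move: fs; rewrite sup_out // => /eqP.
  by rewrite eq_sym oner_eq0.
have ub := sup_upper_bound hs; rewrite fs in ub.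
have [->|x0] := eqVneq x 0; first by rewrite f0 // !normr0.
have nx : 0 < `|x| by rewrite normr_gt0.
have : `|f (`|x|^-1 *: x)| <= 1.
  apply: ub; exists (`|x|^-1 *: x) => //.
  by rewrite /= normrZ normfV normr_id mulVf // gt_eqF.
by rewrite fZ // normrM normfV normr_id ler_pdivrMl // mulr1.
Qed.

Lemma dual_of (R : realType) (X : normedModType R) (g : X -> R) (x0 : X) :
  (forall (a : R) u v, g (a *: u + v) = a * g u + g v) ->
  (forall x, `|g x| <= `|x|) -> `|x0| = 1 -> g x0 = 1 -> dual_unit g.
Proof.
move=> glin gb nx0 gx0; split => //; split.
  apply: (@lip_cont _ _ _ 1) => x y; rewrite mul1r -fB //; exact: gb.
set S := [set `|g x| | x in [set x : X | `|x| <= 1]].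
have S1 : S 1 by exists x0; [rewrite /= nx0 | rewrite gx0 normr1].
have ub : ubound S 1 by move=> _ [x /= hx <-]; exact: le_trans (gb x) hx.
apply/eqP; rewrite eq_le; apply/andP; split.
  by apply: ge_sup => //; exists 1.
by apply: sup_upper_bound => //; split; [exists 1 | exists 1].
Qed.

Lemma ball_radius (R : realType) (X : normedModType R) (c c' : X) (r r' : R) (e : X) :
  `|e| = 1 -> oball c r = oball c' r' -> 0 < r -> 0 < r' -> r' <= r.
Proof.
move=> e1 hb r0 r'0; rewrite leNgt; apply/negP => rr.
have [d [e' [d0 [e'1 he]]]] : exists d : R, exists e' : X, 0 <= d /\ `|e'| = 1 /\ c - c' = d *: e'.
  have [->|cc] := eqVneq c c'; first by exists 0, e; rewrite subrr scale0r.
  have nd : 0 < `|c - c'| by rewrite normr_gt0 subr_eq0.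
  exists `|c - c'|, (`|c - c'|^-1 *: (c - c')); split; first exact: ltW.
  split; first by rewrite normrZ normfV normr_id mulVf // gt_eqF.
  by rewrite scalerA mulfV ?gt_eqF // scale1r.
set s := (r + r') / 2.
have : oball c' r' (c' - s *: e').
  by rewrite /oball /= opprB addrC subrK normrZ e'1 mulr1 gtr0_norm /s; lra.
rewrite -hb /oball /= (_ : c - (c' - s *: e') = (d + s) *: e').
  rewrite normrZ e'1 mulr1 ger0_norm /s; lra.
by rewrite opprB addrC -addrA (addrC (- c')) he scalerDl addrC.
Qed.


Lemma mxnorm_le (R : realType) n (w : 'rV[R]_n) (M : R) :
  0 <= M -> (forall j, `|w ord0 j| <= M) -> `|w| <= M.
Proof.
move=> M0 h; rewrite [leLHS]/Num.norm /= mx_normrE; apply: bigmax_le => // [[i j]] _.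
by rewrite /= (ord1 i); exact: h.
Qed.

Section Vecs.
Variables (R : realType) (n : nat).
Hypothesis hn : (0 < n)%N.

Definition avec (i : 'I_n.+1) : 'rV[R]_n :=
  \row_j (if (i < n)%N then (if (j == i :> nat) then 1 else 0) else -1).

Lemma avec_nz i : avec i != 0.
Proof.
case: (ltnP i n) => hi.
  apply/eqP => /matrixP /(_ ord0 (Ordinal hi)); rewrite !mxE hi eqxx => /eqP.
  by rewrite oner_eq0.
apply/eqP => /matrixP /(_ ord0 (Ordinal hn)); rewrite !mxE ltnNge hi /= => /eqP.
by rewrite oppr_eq0 oner_eq0.
Qed.

Lemma avec_pos (u : 'rV[R]_n) : u != 0 -> exists i, 0 < dot (avec i) u.
Proof.
move=> u0; apply: contrapT => H.
have H' i : dot (avec i) u <= 0.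
  by rewrite leNgt; apply/negP => h; apply: H; exists i.
have hj (j : 'I_n) : u ord0 j <= 0.
  have := H' (widen_ord (leqnSn n) j).
  rewrite /dot (bigD1 j) //= big1 ?addr0; last first.
    move=> k kj; rewrite mxE /= ltn_ord.
    by rewrite (_ : (k == j :> nat) = false) ?mul0r //; apply/negbTE.
  by rewrite mxE /= ltn_ord eqxx mul1r.
have hs : \sum_(j < n) (- u ord0 j) = 0.
  apply/eqP; rewrite eq_le; apply/andP; split.
    have := H' ord_max; rewrite /dot.
    rewrite (eq_bigr (fun j => - u ord0 j)) //.
    by move=> j _; rewrite mxE /= ltnn mulN1r.
  by apply: sumr_ge0 => j _; rewrite oppr_ge0.
apply/negP: u0; rewrite negbK; apply/eqP/rowP => j; rewrite mxE.
apply/eqP; rewrite -oppr_eq0; apply/eqP.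
by apply: (psumr_eq0P (P := predT) (F := fun j => - u ord0 j)) => // k _; rewrite oppr_ge0.
Qed.

End Vecs.

Section Coord4.
Variables (R : realType) (X : normedModType R) (n : nat) (phi : 'rV[R]_n -> X)
  (psi : X -> 'rV[R]_n).
Hypothesis philin : forall (a : R) u v, phi (a *: u + v) = a *: phi u + phi v.
Hypothesis phiK : cancel phi psi.
Hypothesis psiK : cancel psi phi.
Hypothesis hn : (0 < n)%N.

Let phiinj : injective phi := can_inj phiK.
Local Notation N := (N phi).
Implicit Types (u v w y xi : 'rV[R]_n).

Lemma psilin (a : R) (x y : X) : psi (a *: x + y) = a *: psi x + psi y.
Proof. by apply: phiinj; rewrite philin !psiK. Qed.

Lemma Npsi (x : X) : N (psi x) = `|x|.
Proof. by rewrite /N psiK. Qed.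

Lemma max_exists (a : 'rV[R]_n) : a != 0 ->
  exists xi, [/\ N xi = 1, 0 < dot a xi & forall u, dot a u <= dot a xi * N u].
Proof.
move=> a0.
have [c c0 Hc] := N_lb philin phiinj hn.
pose B := [set u : 'rV[R]_n | N u <= 1].
have Bc : compact B.
  apply: bounded_closed_compact.
    apply: (@bnd _ _ _ (c^-1)) => u Bu.
    by rewrite -(ler_pM2l c0) mulfV ?gt_eqF //; exact: le_trans (Hc u) Bu.
  apply: cl_le; exact: N_cont.
have B0 : B 0 by rewrite /B /= N0 //.
have [xi Bxi ximax] := evt_max (ex_intro _ 0 B0) Bc (@dot_contr R n a).
have Na : 0 < N a := N_gt0 philin phiinj a0.
have m0 : 0 < dot a xi.
  have := ximax ((N a)^-1 *: a); rewrite dotZr.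
  have : 0 < (N a)^-1 * dot a a by rewrite mulr_gt0 ?invr_gt0 // dot_gt0.
  move=> h1 h2; apply: lt_le_trans h1 (h2 _).
  by rewrite /B /= (NZ philin) gtr0_norm ?invr_gt0 // mulVf // gt_eqF.
have bnd u : dot a u <= dot a xi * N u.
  have [->|u0] := eqVneq u 0; first by rewrite dot0r N0 // mulr0.
  have Nu : 0 < N u := N_gt0 philin phiinj u0.
  have := ximax ((N u)^-1 *: u); rewrite dotZr.
  rewrite /B /= (NZ philin) gtr0_norm ?invr_gt0 // mulVf ?gt_eqF // lexx => /(_ isT).
  by rewrite ler_pdivrMl // mulrC.
exists xi; split => //.
apply/eqP; rewrite eq_le Bxi /=.
by have := bnd xi; rewrite -{1}[dot a xi]mulr1 ler_pM2l.
Qed.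

Lemma coord_fun (f : X -> R) :
  (forall (a : R) (x y : X), f (a *: x + y) = a * f x + f y) ->
  forall u, f (phi u) = dot (\row_j f (phi (delta_mx 0 j))) u.
Proof.
move=> flin u; rewrite {1}(row_sum_delta u) phi_sum //.
rewrite (big_morph f (fD flin) (f0 flin)) dotC; apply: eq_bigr => j _.
by rewrite phiZ // fZ // mxE.
Qed.

Hypothesis hsm : smooth X.

Lemma claim (xi a : 'rV[R]_n) : N xi = 1 -> 0 < dot a xi ->
  (forall u, dot a u <= dot a xi * N u) ->
  forall u, 0 < dot a u -> exists2 s, 0 < s & N (xi - s *: u) < 1.
Proof.
move=> Nxi m0 hbd u au.
set m := dot a xi in m0 hbd.
have x0 : phi xi != 0.
  by rewrite -normr_gt0 -/(N xi) Nxi.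
have [f [fdu [fx funiq]]] := hsm x0.
pose gi (y : X) := dot a (psi y) / m.
have gilin (c : R) (x y : X) : gi (c *: x + y) = c * gi x + gi y.
  by rewrite /gi psilin dotDr dotZr mulrDl mulrA.
have gib (y : X) : `|gi y| <= `|y|.
  rewrite /gi normrM normfV (gtr0_norm m0) ler_pdivrMr // mulrC ler_norml.
  rewrite -Npsi; apply/andP; split; last exact: hbd.
  rewrite lerNl -dotNr -(NN philin); apply: (le_trans (hbd _)).
  by rewrite lexx.
have gix : gi (phi xi) = 1 by rewrite /gi phiK mulfV // gt_eqF.
have nx : `|phi xi| = 1 by rewrite -/(N xi) Nxi.
have gidu : dual_unit gi by apply: (dual_of gilin gib nx gix).
have gif := funiq _ gidu (etrans gix (esym nx)).
apply: contrapT => H.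
have H' s : 0 < s -> 1 <= N (xi - s *: u).
  by move=> s0; rewrite leNgt; apply/negP => h; apply: H; exists s.
have [b b0 Hb] := N_ub philin.
pose D := [set w : 'rV[R]_n | forall v, dot w v <= N v].
have Dc : compact D.
  apply: bounded_closed_compact.
    apply: (@bnd _ _ _ b) => w Dw; apply: mxnorm_le; first exact: ltW.
    move=> j; have dj : `|delta_mx 0 j : 'rV[R]_n| <= 1.
      apply: mxnorm_le => // k; rewrite mxE.
      by case: (_ && _); rewrite ?normr1 ?normr0.
    have e1 : w ord0 j = dot w (delta_mx 0 j).
      rewrite /dot (bigD1 j) //= big1 ?addr0; last first.
        by move=> k kj; rewrite mxE /= (negbTE kj) mulr0.
      by rewrite mxE !eqxx mulr1.
    rewrite e1 ler_norml; apply/andP; split.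
      rewrite lerNl -dotNr; apply: (le_trans (Dw _)); rewrite (NN philin).
      by apply: (le_trans (Hb _)); rewrite ler_piMr // ltW.
    by apply: (le_trans (Dw _)); apply: (le_trans (Hb _)); rewrite ler_piMr // ltW.
  have -> : D = \bigcap_(v in setT) [set w | dot w v <= N v].
    by apply/seteqP; split => w /= h v; [move=> _; apply: h | apply: h].
  by apply: closed_bigI => v _; apply: cl_le; exact: dot_contl.
pose W := fun k : nat => [set w | D w /\ 1 - (k.+1%:R)^-1 * N u <= dot w xi /\ dot w u <= 0].
have WD k : W k `<=` D by move=> w [].
have Wcl k : closed (W k).
  have -> : W k = D `&` ([set w | 1 - (k.+1%:R)^-1 * N u <= dot w xi] `&` [set w | dot w u <= 0]).
    by apply/seteqP; split => w /= h.
  apply: closedI; first exact: compact_closed.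
  apply: closedI; [apply: cl_ge | apply: cl_le]; exact: dot_contl.
have Wnest i j : (i <= j)%N -> W j `<=` W i.
  move=> ij w [Dw [h1 h2]]; split => //; split => //; apply: le_trans h1.
  rewrite lerD2l lerN2 ler_wpM2r ?N_ge0 //.
  by rewrite lef_pV2 ?posrE ?ltr0n // ler_nat ltnS.
have Wne k : W k !=set0.
  set s := (k.+1%:R : R)^-1.
  have s0 : 0 < s by rewrite invr_gt0 ltr0n.
  set y := xi - s *: u.
  have Ny : 1 <= N y := H' s s0.
  have y0 : phi y != 0 by rewrite -normr_gt0 -/(N y); exact: lt_le_trans ltr01 Ny.
  have [fk [fkdu [fky _]]] := hsm y0.
  have fkb := dual_bound fkdu.
  case: (fkdu) => fklin _.
  exists (\row_j fk (phi (delta_mx 0 j))).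
  have ce := coord_fun fklin.
  have Dw : D (\row_j fk (phi (delta_mx 0 j))).
    move=> v; rewrite -ce; apply: le_trans (ler_norm _) (fkb _).
  split => //.
  have fxi : fk (phi xi) <= 1 by apply: le_trans (ler_norm _) _; rewrite -Nxi; exact: fkb.
  have fy : fk (phi y) = fk (phi xi) - s * fk (phi u) by rewrite /y phiB // phiZ // fB // fZ.
  have fu : `|fk (phi u)| <= N u by exact: fkb.
  rewrite -!ce; rewrite fky -/(N y) in fy.
  move: fu; rewrite ler_norml => /andP[fu1 fu2].
  rewrite -/s; clearbody s y.
  have h1 : 0 <= s * (fk (phi u) + N u) by apply: mulr_ge0; [exact: ltW | lra].
  rewrite mulrDr in h1.
  split; first lra.
  have : s * fk (phi u) <= 0 by lra.
  by rewrite pmulr_rle0.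
have [w wW] := nested_cpt Dc WD Wcl Wne Wnest.
have Dw : D w by case: (wW 0%N).
have wu : dot w u <= 0 by case: (wW 0%N) => _ [].
have wxi1 : dot w xi <= 1 by rewrite -Nxi; exact: Dw.
have wxi : dot w xi = 1.
  apply/eqP; rewrite eq_le wxi1 /=; rewrite leNgt; apply/negP => hlt.
  have Nu1 : 0 < N u + 1 by rewrite ltr_wpDl ?N_ge0.
  have dl : 0 < (1 - dot w xi) / (N u + 1) by rewrite divr_gt0 ?subr_gt0.
  have [k hk] := archi_inv dl.
  case: (wW k.+1) => _ [h1 _].
  rewrite ltr_pdivlMr // in hk.
  have hNu : 0 <= N u by exact: normr_ge0.
  have := inv_gt0 R k; move: (k.+2%:R^-1) hk h1 => t hk h1 t0.
  nra.
pose G (y : X) := dot w (psi y).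
have Glin (c : R) (x y : X) : G (c *: x + y) = c * G x + G y.
  by rewrite /G psilin dotDr dotZr.
have Gb (y : X) : `|G y| <= `|y|.
  rewrite /G ler_norml -Npsi; apply/andP; split; last exact: Dw.
  by rewrite lerNl -dotNr -(NN philin); exact: Dw.
have Gx : G (phi xi) = 1 by rewrite /G phiK.
have Gf := funiq _ (dual_of Glin Gb nx Gx) (etrans Gx (esym nx)).
have := Gf (phi u); rewrite -gif /G /gi !phiK => e.
move: wu; rewrite e leNgt => /negP; apply; exact: divr_gt0.
Qed.

End Coord4.


Lemma monoN (R : realType) (X : normedModType R) n (phi : 'rV[R]_n -> X)
  (philin : forall (a : R) u v, phi (a *: u + v) = a *: phi u + phi v)
  (xi u : 'rV[R]_n) (t T : R) :
  N phi xi = 1 -> t <= T -> N phi (t *: xi - u) < t -> N phi (T *: xi - u) < T.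
Proof.
move=> Nxi tT h.
have -> : T *: xi - u = (t *: xi - u) + (T - t) *: xi.
  by apply/rowP => j; rewrite !mxE; ring.
apply: (le_lt_trans (ND philin _ _)); rewrite (NZ philin) Nxi mulr1 ger0_norm ?subr_ge0 //.
lra.
Qed.

Lemma part2 (R : realType) (X : normedModType R) (n : nat)
  (hn : (0 < n)%N) (hdim : is_dim X n) (A : set X)
  (hbd : norm_bounded A) :
  (smooth X -> 0 < dist0 A ->
     exists f : 'I_n.+1 -> set X, injective f /\ ball_covering A (range f)).
Proof.
case: hdim => phi [philin [psi phiK psiK]].
have phiinj : injective phi := can_inj phiK.
move=> hsm hd.
set d := dist0 A in hd.
have [M hM] := hbd.
have Ad a : A a -> d <= `|a|.
  move=> Aa; apply: (@ge_inf _ [set `|a| | a in A]); last by exists a.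
  by exists 0 => _ [x _ <-].
have hx i : exists xi : 'rV[R]_n, [/\ N phi xi = 1, 0 < dot (avec R i) xi &
    forall u, dot (avec R i) u <= dot (avec R i) xi * N phi u].
  have := max_exists philin phiK hn (avec_nz R hn i). move=> h. exact h.
have [Xi HXi] := choice hx.
have NXi i : N phi (Xi i) = 1 by case: (HXi i).
have [c c0 Hc] := N_lb philin phiinj hn.
pose K := [set u : 'rV[R]_n | d <= N phi u /\ N phi u <= M].
have Kc : compact K.
  apply: bounded_closed_compact.
    apply: (@bnd _ _ _ (M / c)) => u [_ Ku].
    by rewrite ler_pdivlMr // mulrC; exact: le_trans (Hc u) Ku.
  have -> : K = [set u | d <= N phi u] `&` [set u | N phi u <= M] by [].
  by apply: closedI; [apply: cl_ge | apply: cl_le]; exact: N_cont.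
pose U := fun T : nat => [set u : 'rV[R]_n | exists i, N phi (T%:R *: Xi i - u) < T%:R].
have Uop T : open (U T).
  have -> : U T = \bigcup_(i in setT) [set u | N phi (T%:R *: Xi i - u) < T%:R].
    by apply/seteqP; split => u /= [i]; [exists i | move=> _; exists i].
  apply: bigcup_open => i _; apply: op_lt; exact: N_shift_cont.
have Ucov : K `<=` \bigcup_(T in setT) U T.
  move=> u [du _].
  have u0 : u != 0.
    by apply/eqP => u0; move: du; rewrite u0 N0 // leNgt hd.
  have [i ai] := avec_pos u0.
  case: (HXi i) => N1 m0 hb.
  have [s s0 hs] := claim philin phiK psiK hsm N1 m0 hb ai.
  exists (Num.trunc (s^-1)).+1 => //; exists i.
  apply: (@monoN _ _ _ _ philin _ _ (s^-1)) => //.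
    exact/ltW/truncnS_gt.
  have -> : s^-1 *: Xi i - u = s^-1 *: (Xi i - s *: u).
    by rewrite scalerBr scalerA mulVf ?gt_eqF // scale1r.
  by rewrite (NZ philin) gtr0_norm ?invr_gt0 // gtr_pMr ?invr_gt0.
have Kc' := Kc; rewrite compact_cover in Kc'.
have [D' _ hD] := Kc' nat setT U (fun T _ => Uop T) Ucov.
pose T0 := (\max_(k <- finmap.enum_fset D') k).+1.
have KU u : K u -> exists i, N phi (T0%:R *: Xi i - u) < T0%:R.
  move=> Ku; have [k kD [i hi]] := hD u Ku.
  exists i; apply: (monoN philin (NXi i) _ hi).
  rewrite ler_nat /T0; apply: leqW; exact: (@leq_bigmax_seq nat (finmap.enum_fset D') xpredT id k kD isT).
pose rad (i : 'I_n.+1) : R := (T0 + i)%:R.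
have rad0 i : 0 < rad i by rewrite /rad ltr0n addn_gt0.
pose f (i : 'I_n.+1) := oball (phi (rad i *: Xi i)) (rad i).
have e1 : `|phi (Xi ord0)| = 1 by exact: NXi.
exists f; split.
  move=> i j fij; apply: val_inj => /=.
  have h1 := ball_radius e1 fij (rad0 i) (rad0 j).
  have h2 := ball_radius e1 (esym fij) (rad0 j) (rad0 i).
  have : rad i = rad j by apply/eqP; rewrite eq_le h1 h2.
  by rewrite /rad => /eqP; rewrite eqr_nat eqn_add2l => /eqP.
split.
  move=> B [i _ <-]; exists (phi (rad i *: Xi i)), (rad i); split => //; split => //.
  by rewrite -/(N phi _) (NZ philin) NXi mulr1 gtr0_norm.
move=> a Aa.
have Ku : K (psi a) by rewrite /K /= Npsi //; split; [exact: Ad | exact: hM].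
have [i hi] := KU _ Ku.
exists (f i); first by exists i.
rewrite /f /oball /=.
have -> : phi (rad i *: Xi i) - a = phi (rad i *: Xi i - psi a) by rewrite phiB // psiK.
apply: (monoN philin (NXi i) _ hi).
by rewrite /rad ler_nat leq_addr.
Qed.

Unset Implicit Arguments.

Theorem mainTheorem7 (R : realType) (X : normedModType R) (n : nat)
  (hn : (0 < n)%N) (hdim : is_dim X n) (A : set X)
  (hbd : norm_bounded A) (h0 : ~ A 0)
  (hrad : forall x : X, x != 0 -> exists r : R, 0 < r /\ A (r *: x)) :
  (forall C : set (set X), ball_covering A C ->
     exists f : 'I_n.+1 -> set X, injective f /\ (forall i, C (f i))) /\
  (smooth X -> 0 < dist0 A ->
     exists f : 'I_n.+1 -> set X, injective f /\ ball_covering A (range f)).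
Proof.
split.
  exact: (part1 hn hdim hrad).
exact: (part2 hn hdim hbd).
Qed.
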